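(* For a nonempty finite subset $E\subseteq\mathbb{N}$ the following are equivalent: (1) $\mathcal{F}_E=\mathcal{F}_\infty$; (2) $A_E=\{2\}$. Moreover, if $|E|=2$, then (1) and (2) are equivalent to (3): $E=\{2^n,2^{n+1}\}$ for some integer $n\ge0$.
   Context: $\mathbb{N}=\{1,2,\dots\}$, $\mathbb{N}_0=\{0\}\cup\mathbb{N}$, $\Pi$ the set of primes. The Kirch topology $\tau_K$ on $\mathbb{N}$ is generated by the base of all $a+b\mathbb{N}_0=\{a+bn:n\in\mathbb{N}_0\}$ with $a,b\in\mathbb{N}$ coprime and $b$ square-free. Closures $\overline{U}$ are in $\tau_K$; $\tau_x=\{U\in\tau_K:x\in U\}$. For finite $E\subseteq\mathbb{N}$, $\mathcal{F}_E=\{B\subseteq\mathbb{N}:\exists (U_x)_{x\in E}\in\prod_{x\in E}\tau_x\ (\bigcap_{x\in E}\overline{U_x}\subseteq B)\}$, and $\mathcal{F}_\infty=\{B\subseteq\mathbb{N}:\exists n\in\mathbb{N}\ \exists U_1,\dots,U_n\in\tau_K\setminus\{\emptyset\}\ (\overline{U_1}\cap\dots\cap\overline{U_n}\subseteq B)\}$. For nonempty finite $E$, $A_E=\{p\in\Pi:\exists k\in\mathbb{N}\ (E\subseteq p\mathbb{Z}\cup(k+p\mathbb{Z}))\}$. *)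

(* Defs.v *)
(* Subsets of N = {1,2,...} are
   represented as predicates [nat -> Prop] on nat, required to avoid 0. *)
From mathcomp Require Import all_boot.
From mathcomp Require Export finmap.
Set Implicit Arguments. Unset Strict Implicit. Unset Printing Implicit Defensive.

Definition squarefree (b : nat) : Prop :=
  forall p, prime p -> ~ (p * p %| b).

Definition arith (a b : nat) : nat -> Prop :=
  fun x => exists n, x = a + b * n.

(* basic open sets of the Kirch topology *)
Definition kbase (V : nat -> Prop) : Prop :=
  exists a b, 0 < a /\ 0 < b /\ coprime a b /\ squarefree b /\
    (forall x, V x <-> arith a b x).

Definition kopen (U : nat -> Prop) : Prop :=
  (forall x, U x -> 0 < x) /\
  (forall x, U x -> exists V, kbase V /\ V x /\ (forall y, V y -> U y)).

Definition kclosure (U : nat -> Prop) : nat -> Prop :=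
  fun x => 0 < x /\ forall V, kopen V -> V x -> exists y, V y /\ U y.

Definition FE (E : {fset nat}) (B : nat -> Prop) : Prop :=
  exists U : nat -> (nat -> Prop),
    (forall x, x \in E -> kopen (U x) /\ U x x) /\
    (forall y, (forall x, x \in E -> kclosure (U x) y) -> B y).

Definition Finf (B : nat -> Prop) : Prop :=
  exists n, 0 < n /\ exists U : nat -> (nat -> Prop),
    (forall i, i < n -> kopen (U i) /\ exists z, U i z) /\
    (forall y, (forall i, i < n -> kclosure (U i) y) -> B y).

Definition FE_eq_Finf (E : {fset nat}) : Prop :=
  forall B : nat -> Prop, (forall x, B x -> 0 < x) -> (FE E B <-> Finf B).

Definition AE (E : {fset nat}) (p : nat) : Prop :=
  prime p /\ exists k, 0 < k /\
    forall x, x \in E -> (p %| x) \/ (x = k %[mod p]).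

(* Main.v *)
Require Import Defs.
From mathcomp Require Import all_boot finmap zify.
Set Implicit Arguments. Unset Strict Implicit.


Lemma prodl_gt0 (s : seq nat) : all prime s -> 0 < \prod_(q <- s) q.
Proof.
elim: s => [|q s IH] /=; first by rewrite big_nil.
move=> /andP[pq ps]; rewrite big_cons muln_gt0 prime_gt0 //=; exact: IH.
Qed.

Lemma prodl_prime_dvd (s : seq nat) p : prime p -> all prime s ->
  p %| \prod_(q <- s) q -> p \in s.
Proof.
move=> pp; elim: s => [|q s IH] /=; first by rewrite big_nil dvdn1 => _ /eqP h; rewrite h in pp.
move=> /andP[pq ps]; rewrite big_cons Euclid_dvdM // dvdn_prime2 // inE.
by case/orP=> [->//|/(IH ps) ->]; rewrite orbT.
Qed.

Lemma mem_dvd_prodl (s : seq nat) q : q \in s -> q %| \prod_(r <- s) r.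
Proof.
elim: s => [|r s IH] //=; rewrite inE big_cons.
case/orP=> [/eqP->|/IH h]; first exact: dvdn_mulr.
exact: dvdn_mull.
Qed.

Lemma prodl_sqf (s : seq nat) : uniq s -> all prime s -> squarefree (\prod_(q <- s) q).
Proof.
elim: s => [|q s IH] /=.
  move=> _ _ p pp; rewrite big_nil dvdn1 => /eqP h.
  have p1 := prime_gt1 pp.
  have : 1 < p * p by nia.
  by rewrite h.
move=> /andP[qs us] /andP[pq ps] p pp; rewrite big_cons => hd.
case: (eqVneq p q) => [epq|npq].
  subst q; move: hd; rewrite dvdn_pmul2l ?prime_gt0 // => /(@prodl_prime_dvd s p pp ps) h.
  by rewrite h in qs.
apply: (IH us ps p pp); move: hd; rewrite Gauss_dvdr //.
by rewrite coprimeMl !prime_coprime // dvdn_prime2 // npq.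
Qed.

Lemma coprime_prodl x (s : seq nat) : (forall q, q \in s -> coprime x q) ->
  coprime x (\prod_(q <- s) q).
Proof.
elim: s => [|q s IH] h; first by rewrite big_nil coprimen1.
rewrite big_cons coprimeMr h ?mem_head //= IH // => r rs; apply: h; by rewrite inE rs orbT.
Qed.

Lemma sqf_dvd g d : squarefree d -> g %| d -> squarefree g.
Proof. by move=> sd gd p pp h; apply: (sd p pp); exact: dvdn_trans gd. Qed.

Lemma sqf_mod g u v : 0 < g -> squarefree g ->
  (forall q, prime q -> q %| g -> u = v %[mod q]) -> u = v %[mod g].
Proof.
move=> g0 sg h.
wlog uv : u v h / u <= v.
  move=> W; case: (leqP u v) => [|/ltnW] l; first exact: W.
  by symmetry; apply: W => // q pq qg; symmetry; apply: h.
apply/eqP; rewrite eq_sym eqn_mod_dvd //.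
apply/(dvdn_partP _ g0) => p; rewrite mem_primes => /and3P[pp _ pg].
rewrite p_part.
have hl : logn p g <= 1.
  rewrite leqNgt; apply/negP => l2.
  apply: (sg p pp); have : p ^ 2 %| g by rewrite pfactor_dvdn.
  by rewrite expnS expn1.
apply: (@dvdn_trans (p ^ 1)); first by rewrite dvdn_exp2l.
rewrite expn1 -eqn_mod_dvd //; apply/eqP; symmetry; exact: h.
Qed.

Lemma ap_meet_le a b c d : 0 < b -> a <= c -> c = a %[mod gcdn b d] ->
  exists n m : nat, c + d * n = a + b * m.
Proof.
move=> b0 ac.
case: (egcdnP d b0) => km kn E _.
move/eqP; rewrite eqn_mod_dvd // => /dvdnP[t Ht].
exists (kn * t), (km * t).
have -> : c = a + t * gcdn b d by lia.
have -> : b * (km * t) = (km * b) * t by rewrite mulnA (mulnC b).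
rewrite E mulnDl; lia.
Qed.

Lemma ap_meet a b c d : 0 < b -> 0 < d -> c = a %[mod gcdn b d] ->
  exists n m : nat, c + d * n = a + b * m.
Proof.
move=> b0 d0 h; case: (leqP a c) => l; first exact: ap_meet_le.
have [m [n E]] : exists n m : nat, a + b * n = c + d * m.
  by apply: ap_meet_le; [done| exact: ltnW | rewrite gcdnC h].
by exists n, m.
Qed.

Lemma sqf_prime p : prime p -> squarefree p.
Proof.
move=> pp q pq h.
have qp : q %| p by apply: dvdn_trans h; exact: dvdn_mulr.
move: qp; rewrite dvdn_prime2 // => /eqP eqp; subst q.
have := dvdn_leq (prime_gt0 pp) h; have := prime_gt1 pp; nia.
Qed.

Lemma arith_pos a b x : 0 < a -> arith a b x -> 0 < x.
Proof. by move=> a0 [n ->]; lia. Qed.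

Lemma kopen_arith a b : 0 < a -> 0 < b -> coprime a b -> squarefree b ->
  kopen (arith a b).
Proof.
move=> a0 b0 cab sb; split; first by move=> x; exact: arith_pos.
move=> x hx; exists (arith a b); split; last by split.
by exists a, b.
Qed.

Lemma kclos_mono (U V : nat -> Prop) y : (forall z, U z -> V z) ->
  kclosure U y -> kclosure V y.
Proof.
move=> UV [y0 H]; split => // W oW Wy.
by have [z [Wz Uz]] := H W oW Wy; exists z; split => //; apply: UV.
Qed.

Lemma mod_addmul x q n : (x + q * n) %% q = x %% q.
Proof. by rewrite addnC mulnC modnMDl. Qed.

Lemma kclos_nec a b y q : kclosure (arith a b) y -> prime q -> q %| b ->
  ~~ (q %| y) -> y = a %[mod q].
Proof.
move=> [y0 H] pq /dvdnP[r br] nqy.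
have op : kopen (arith y q).
  apply: kopen_arith => //; first exact: prime_gt0.
    by rewrite coprime_sym prime_coprime.
  exact: sqf_prime.
have [z [[n1 ->] [n2 E]]] := H _ op (ex_intro _ 0 (esym (etrans (f_equal (addn y) (muln0 q)) (addn0 y)))).
rewrite -(mod_addmul y q n1) E br.
have -> : r * q * n2 = q * (r * n2) by rewrite (mulnC r) -mulnA.
by rewrite mod_addmul.
Qed.

Lemma kclos_suff a b y : 0 < y -> 0 < b ->
  (forall q, prime q -> q %| b -> q %| y \/ y = a %[mod q]) ->
  kclosure (arith a b) y.
Proof.
move=> y0 b0 H; split => // V [_ oV] Vy.
have [W [[c [d [c0 [d0 [cd [sd HW]]]]]] [Wy WV]]] := oV y Vy.
have [n0 yE] := (HW y).1 Wy.
have g0 : 0 < gcdn b d by rewrite gcdn_gt0 b0.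
have : c = a %[mod gcdn b d].
  apply: sqf_mod => //; first exact: (sqf_dvd sd (dvdn_gcdr b d)).
  move=> q pq qg.
  have qb : q %| b := dvdn_trans qg (dvdn_gcdl b d).
  have qd : q %| d := dvdn_trans qg (dvdn_gcdr b d).
  have nqc : ~~ (q %| c).
    apply/negP => qc; have : q %| gcdn c d by rewrite dvdn_gcd qc qd.
    by rewrite (eqP cd) dvdn1 => /eqP q1; rewrite q1 in pq.
  have ymc : y = c %[mod q].
    case/dvdnP: qd => r dr; rewrite yE dr.
    have -> : r * q * n0 = q * (r * n0) by rewrite (mulnC r) -mulnA.
    by rewrite mod_addmul.
  case: (H q pq qb) => [qy|ya]; last by rewrite -ymc.
  by rewrite /dvdn in qy; move: nqc; rewrite /dvdn -ymc qy.
move/(ap_meet b0 d0) => [n [m E]].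
exists (c + d * n); split; first by apply: WV; apply/HW; exists n.
by exists m.
Qed.

Lemma common_mult (l : seq nat) (P : nat -> nat -> Prop) :
  (forall x, x \in l -> exists b, 0 < b /\ P x b) ->
  exists N, 0 < N /\ forall x, x \in l -> exists b, b %| N /\ P x b.
Proof.
elim: l => [|y l IH] H; first by exists 1.
have [N [N0 HN]] : exists N, 0 < N /\ forall x, x \in l -> exists b, b %| N /\ P x b.
  by apply: IH => x xl; apply: H; rewrite inE xl orbT.
have [b [b0 Pb]] := H y (mem_head _ _).
exists (N * b); split; first by rewrite muln_gt0 N0.
move=> x; rewrite inE => /orP[/eqP->|xl]; first by exists b; split => //; exact: dvdn_mull.
by have [b' [bN Pb']] := HN x xl; exists b'; split => //; exact: dvdn_mulr.
Qed.

Lemma opens_basic (U : nat -> Prop) x : kopen U -> U x ->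
  exists b, 0 < b /\ exists a, [/\ 0 < a, coprime a b, arith a b x &
     forall z, arith a b z -> U z].
Proof.
move=> [_ oU] Ux; have [W [[a [b [a0 [b0 [cab [_ HW]]]]]] [Wx WU]]] := oU x Ux.
exists b; split => //; exists a; split => //; first by apply/HW.
by move=> z /HW; exact: WU.
Qed.

Lemma arith_mod a b x q : arith a b x -> q %| b -> x = a %[mod q].
Proof.
move=> [n ->] /dvdnP[r ->].
have -> : r * q * n = q * (r * n) by rewrite (mulnC r) -mulnA.
by rewrite mod_addmul.
Qed.

Lemma dir1 (E : {fset nat}) : (forall x, x \in E -> 0 < x) -> FE_eq_Finf E ->
  forall p, prime p -> odd p -> ~ AE E p.
Proof.
move=> Epos H p pp op [_ [k [k0 Hk]]].
have p2 : 2 < p.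
  have := prime_gt1 pp; move: op; case: (p) => [|[|[|r]]] //.
pose B y := 0 < y /\ p %| y.
have fin : Finf B.
  exists 2; split => //.
  exists (fun i => if i == 0 then arith 1 p else arith 2 p); split.
    move=> i _; case: (i == 0); split.
    - apply: kopen_arith => //; [exact: prime_gt0 | exact: coprime1n | exact: sqf_prime].
    - by exists 1, 0; rewrite muln0.
    - apply: kopen_arith => //; [exact: prime_gt0 | by rewrite coprime2n | exact: sqf_prime].
    - by exists 2, 0; rewrite muln0.
  move=> y Hy; have h0 := Hy 0 isT; have h1 := Hy 1 isT; rewrite /= in h0 h1.
  split; first by case: h0.
  case: (boolP (p %| y)) => // nd.
  have e1 := kclos_nec h0 pp (dvdnn p) nd; have e2 := kclos_nec h1 pp (dvdnn p) nd.
  by move: e2; rewrite e1 !modn_small // ltnW.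
have [U [HU HB]] := (H B (fun y h => proj1 h)).2 fin.
have [N [N0 HN]] := @common_mult (enum_fset E)
  (fun x b => exists a, [/\ 0 < a, coprime a b, arith a b x &
     forall z, arith a b z -> U x z])
  (fun x xE => opens_basic (proj1 (HU x xE)) (proj2 (HU x xE))).
pose k' := if p %| k then 1 else k.
have nk' : ~~ (p %| k').
  rewrite /k'; case: ifP => [_|->//]; by rewrite dvdn1; case: (p) p2 => [|[]].
have Hk' : forall x, x \in E -> p %| x \/ x = k' %[mod p].
  move=> x xE; case: (Hk x xE) => [->|e]; first by left.
  rewrite /k'; case: ifP => pk; last by right.
  by left; rewrite /dvdn e; move: pk; rewrite /dvdn.
pose N' := N`_p^'.
have co : coprime p N' by apply: (@pnat_coprime p); [exact: pnat_id | exact: part_pnat].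
pose y := chinese p N' k' 0.
have yp : y = k' %[mod p] by apply: chinese_modl.
have yN : N' %| y by rewrite /dvdn chinese_modr // mod0n.
have npy : ~~ (p %| y) by rewrite /dvdn yp.
have y0 : 0 < y by case: (y) npy => //; rewrite dvdn0.
suff : B y by case=> _; rewrite (negbTE npy).
apply: HB => x xE.
have [b [bN [a [a0 cab xab sub]]]] := HN x xE.
apply: (kclos_mono sub); apply: kclos_suff => //; first exact: (dvdn_gt0 N0 bN).
move=> q pq qb; case: (eqVneq q p) => [eqp|nqp].
  subst q; right.
  have xa := arith_mod xab qb.
  have npa : ~~ (p %| a).
    apply/negP => pa; have : p %| gcdn a b by rewrite dvdn_gcd pa qb.
    by rewrite (eqP cab) dvdn1 => /eqP p1; rewrite p1 in pp.
  have npx : ~~ (p %| x) by rewrite /dvdn xa.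
  case: (Hk' x xE) => [px|xk]; first by rewrite px in npx.
  by rewrite yp -xk.
left; apply: dvdn_trans yN.
have qN : q %| N := dvdn_trans qb bN.
move: qN; rewrite -(partnC p N0) Euclid_dvdM // => /orP[qNp|//].
have : p.-nat q by apply: pnat_dvd qNp (part_pnat _ _).
by rewrite pnatE // inE (negbTE nqp).
Qed.

Lemma even_prime q : prime q -> ~~ odd q -> q = 2.
Proof.
move=> pq eq; have : 2 %| q by rewrite dvdn2.
by rewrite dvdn_prime2 // => /eqP.
Qed.

Lemma dir2 (E : {fset nat}) : E != fset0 -> (forall x, x \in E -> 0 < x) ->
  (forall p, prime p -> odd p -> ~ AE E p) -> FE_eq_Finf E.
Proof.
move=> En Epos Hodd B Bpos; split.
  case=> U [HU HB].
  exists #|` E|; split; first by rewrite cardfs_gt0.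
  exists (fun i => U (nth 0 (enum_fset E) i)); split.
    move=> i ilt; have xE : nth 0 (enum_fset E) i \in E by apply: mem_nth.
    by have [o u] := HU _ xE; split => //; exists (nth 0 (enum_fset E) i).
  move=> y Hy; apply: HB => x xE.
  have := Hy (index x (enum_fset E)); rewrite nth_index //; apply.
  by rewrite index_mem.
case=> n [n0 [U [HU HB]]].
have [N [N0 HN]] : exists N, 0 < N /\ forall i, i \in iota 0 n -> exists b, b %| N /\
  exists a, [/\ 0 < a, coprime a b, (exists z, arith a b z) &
     forall z, arith a b z -> U i z].
  apply: common_mult => i; rewrite mem_iota add0n => /andP[_ il].
  have [oU [z Uz]] := HU i il.
  have [b [b0 [a [a0 cab abz sub]]]] := opens_basic oU Uz.
  exists b; split => //; exists a; split => //; by exists z.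
pose s x := [seq q <- primes N | odd q && ~~ (q %| x)].
have sprime : forall x, all prime (s x).
  by move=> x; apply/allP => q; rewrite mem_filter mem_primes => /andP[_ /and3P[]].
exists (fun x => arith x (\prod_(q <- s x) q)); split.
  move=> x xE; split; last by exists 0; rewrite muln0 addn0.
  apply: kopen_arith; [exact: Epos | exact: prodl_gt0 | | ].
    apply: coprime_prodl => q; rewrite mem_filter mem_primes => /andP[/andP[_ nqx] /and3P[pq _ _]].
    by rewrite coprime_sym prime_coprime.
  by apply: prodl_sqf => //; apply: filter_uniq; exact: primes_uniq.
move=> y Hy; apply: HB => i il.
have [x0 x0E] := fset0Pn _ En.
have y0 : 0 < y by case: (Hy x0 x0E).
have iI : i \in iota 0 n by rewrite mem_iota add0n il.
have [b [bN [a [a0 cab _ sub]]]] := HN i iI.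
apply: (kclos_mono sub); apply: kclos_suff => //; first exact: (dvdn_gt0 N0 bN).
move=> q pq qb; case: (boolP (odd q)) => oq; last first.
  have q2 := even_prime pq oq; subst q.
  have oa : odd a.
    rewrite -coprimen2; apply: (coprime_dvdr qb); by [].
  case: (boolP (odd y)) => oy; last by left; rewrite dvdn2.
  by right; rewrite !modn2 oy oa.
case: (boolP (q %| y)) => [|nqy]; first by left.
exfalso; apply: (Hodd q pq oq); split => //; exists y; split => //.
move=> x xE; case: (boolP (q %| x)) => [|nqx]; first by left.
right; symmetry; apply: (kclos_nec (Hy x xE) pq _ nqy).
apply: mem_dvd_prodl; rewrite mem_filter oq nqx mem_primes pq N0 /=.
exact: dvdn_trans qb bN.
Qed.

Lemma AE_2 (E : {fset nat}) : AE E 2.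
Proof.
split => //; exists 1; split => // x _.
by rewrite dvdn2 modn2; case: (odd x); [right|left].
Qed.

Lemma AE_iff (E : {fset nat}) :
  (forall p, AE E p <-> p = 2) <-> (forall p, prime p -> odd p -> ~ AE E p).
Proof.
split.
  by move=> H p pp op /H p2; subst p.
move=> H p; split; last by move=> ->; exact: AE_2.
move=> hp; have pp : prime p by case: hp.
case: (boolP (odd p)) => op; first by case: (H p pp op hp).
exact: even_prime.
Qed.

Lemma pow2_of x : 0 < x -> (forall p, prime p -> odd p -> ~~ (p %| x)) ->
  exists a, x = 2 ^ a.
Proof.
move=> x0 H; exists (logn 2 x).
have m0 : 0 < x`_(2^') by apply: part_gt0.
suff m1 : x`_(2^') = 1 by rewrite -{1}(partnC 2 x0) m1 muln1 p_part.
case: (ltngtP (x`_(2^')) 1) => [lt1|m1|//]; first by lia.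
have pq := pdiv_prime m1.
have qm := pdiv_dvd (x`_(2^')).
have : 2^'.-nat (pdiv (x`_(2^'))) by apply: pnat_dvd qm (part_pnat _ _).
rewrite pnatE // !inE => n2.
have oq : odd (pdiv (x`_(2^'))).
  case: (boolP (odd _)) => // e; have e2 := even_prime pq e.
  by rewrite e2 in n2.
have := H _ pq oq; rewrite (dvdn_trans qm) //; exact: dvdn_part.
Qed.

Lemma odd_nd2 p n : prime p -> odd p -> ~~ (p %| 2 ^ n).
Proof.
move=> pp op; rewrite Euclid_dvdX // dvdn_prime2 //.
by case: eqP => // e; subst p.
Qed.

Lemma key_lt x y : 0 < x -> x < y ->
  (forall p, prime p -> odd p -> ~ (p %| x \/ p %| y \/ x = y %[mod p])) <->
  exists n, x = 2 ^ n /\ y = 2 ^ n.+1.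
Proof.
move=> x0 xy; split => [H|[n [-> ->]] p pp op].
  have [a ea] := pow2_of x0 (fun p pp op => introN idP (fun px => H p pp op (or_introl px))).
  have y0 : 0 < y by lia.
  have [b eb] := pow2_of y0 (fun p pp op =>
     introN idP (fun py => H p pp op (or_intror (or_introl py)))).
  subst x y.
  have ab : a < b by rewrite -(@ltn_exp2l 2).
  case: (eqVneq b a.+1) => [->|nb]; first by exists a.
  have ab2 : a.+2 <= b by lia.
  pose m := 2 ^ (b - a) - 1.
  have pe : 2 ^ b = 2 ^ a * 2 ^ (b - a) by rewrite -expnD subnKC // ltnW.
  have m4 : 4 <= 2 ^ (b - a).
    have : 2 ^ 2 <= 2 ^ (b - a) by rewrite leq_exp2l //; lia.
    by [].
  have m1 : 1 < m by rewrite /m; lia.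
  have om : odd m.
    rewrite /m oddB; last by lia.
    rewrite oddX (_ : (b - a == 0) = false) //; apply/eqP; lia.
  have pq := pdiv_prime m1; have qm := pdiv_dvd m.
  have oq : odd (pdiv m).
    case: (boolP (odd _)) => // e; have e2 := even_prime pq e.
    by move: qm; rewrite e2 dvdn2 om.
  apply: False_ind; apply: (H _ pq oq); right; right.
  apply/eqP; rewrite eq_sym eqn_mod_dvd; last by rewrite leq_exp2l // ltnW.
  rewrite pe -{2}(muln1 (2 ^ a)) -mulnBr; exact: dvdn_mull.
move=> [h|[h|h]]; try by move: h; apply/negP; apply: odd_nd2.
have : p %| 2 ^ n.+1 - 2 ^ n.
  by rewrite -eqn_mod_dvd; [rewrite h | rewrite leq_exp2l].
have -> : 2 ^ n.+1 - 2 ^ n = 2 ^ n by rewrite expnS; lia.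
apply/negP; exact: odd_nd2.
Qed.

Lemma card2 (E : {fset nat}) : #|` E| = 2 ->
  exists x y, x != y /\ forall z, (z \in E) = (z == x) || (z == y).
Proof.
move=> c; have u := fset_uniq E.
have s : size (enum_fset E) = 2 by [].
move: s u; case e: (enum_fset E) => [|x [|y [|]]] //= _ u.
exists x, y; split; first by move: u; rewrite inE andbT.
by move=> z; rewrite -[z \in E]/(z \in enum_fset E) e !inE.
Qed.

Lemma AE_pair (E : {fset nat}) x y : 0 < x -> 0 < y ->
  (forall z, (z \in E) = (z == x) || (z == y)) -> forall p, prime p ->
  (AE E p <-> p %| x \/ p %| y \/ x = y %[mod p]).
Proof.
move=> x0 y0 mE p pp; split.
  case=> _ [k [k0 Hk]].
  have xE : x \in E by rewrite mE eqxx.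
  have yE : y \in E by rewrite mE eqxx orbT.
  case: (Hk x xE) => [|hx]; first by left.
  case: (Hk y yE) => [|hy]; first by right; left.
  by right; right; rewrite hx hy.
move=> h; split => //.
case: h => [px|[py|xy]].
- exists y; split => // z; rewrite mE => /orP[/eqP->|/eqP->]; by [left|right].
- exists x; split => // z; rewrite mE => /orP[/eqP->|/eqP->]; by [right|left].
- exists x; split => // z; rewrite mE => /orP[/eqP->|/eqP->]; right => //.
Qed.

Unset Implicit Arguments. Set Strict Implicit.
Open Scope fset_scope.

Theorem lemma3p8 (E : {fset nat}) :
  E != fset0 -> (forall x, x \in E -> 0 < x) ->
  (FE_eq_Finf E <-> (forall p, AE E p <-> p = 2)) /\
  (#|` E| = 2 ->
     (FE_eq_Finf E <-> exists n : nat, E = [fset 2 ^ n; 2 ^ n.+1]) /\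
     ((forall p, AE E p <-> p = 2) <-> exists n : nat, E = [fset 2 ^ n; 2 ^ n.+1])).
Proof.
move=> En Epos.
have P1 : FE_eq_Finf E <-> (forall p, AE E p <-> p = 2).
  split => [H|H]; first exact/(AE_iff E).2/(dir1 Epos H).
  exact: (dir2 En Epos ((AE_iff E).1 H)).
split => // c2.
suff P2 : (forall p, AE E p <-> p = 2) <-> exists n : nat, E = [fset 2 ^ n; 2 ^ n.+1].
  by split => //; split => h; [apply/P2/P1 | apply/P1/P2].
have [x [y [nxy mE]]] := card2 c2.
wlog xy : x y nxy mE / x < y.
  move=> W; case: (ltngtP x y) => [l|l|e]; first by apply: (W x y).
    by apply: (W y x) => //; [rewrite eq_sym | move=> z; rewrite mE orbC].
  by rewrite e eqxx in nxy.
have x0 : 0 < x by apply: Epos; rewrite mE eqxx.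
have y0 : 0 < y by apply: Epos; rewrite mE eqxx orbT.
have S1 : (forall p, AE E p <-> p = 2) <->
   (forall p, prime p -> odd p -> ~ (p %| x \/ p %| y \/ x = y %[mod p])).
  split => H.
    move=> p pp op h; apply: ((AE_iff E).1 H p pp op); exact/(AE_pair x0 y0 mE pp).
  apply/(AE_iff E) => p pp op h; apply: (H p pp op); exact/(AE_pair x0 y0 mE pp).
have S2 := key_lt x0 xy.
split => [h|[n En2]].
  have [n [ex ey]] := S2.1 (S1.1 h); exists n; apply/fsetP => z.
  by rewrite mE !inE ex ey.
apply/S1/S2; exists n.
have xF : x \in [fset 2 ^ n; 2 ^ n.+1] by rewrite -En2 mE eqxx.
have yF : y \in [fset 2 ^ n; 2 ^ n.+1] by rewrite -En2 mE eqxx orbT.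
have lt2 : 2 ^ n < 2 ^ n.+1 by rewrite ltn_exp2l.
move: xF yF; rewrite !inE => /orP[/eqP ex|/eqP ex] /orP[/eqP ey|/eqP ey]; lia.
Qed.
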